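(* Consider the type with a single binary operation. For no regular variety $\mathcal{V}$ of commutative groupoids is the Mal'tsev product $\mathcal{V}\circ\mathcal{S}$ a variety. In particular neither $\mathcal{S}\circ\mathcal{S}$ nor $\mathcal{CG}\circ\mathcal{S}$ is a variety, where $\mathcal{CG}$ is the variety of commutative groupoids.
   Context: An identity is regular if exactly the same variables occur on both sides; a variety is regular if every identity it satisfies is regular. $\mathcal{S}$ is the variety of semilattices (groupoids satisfying all regular identities); it is the smallest regular variety. For a class $\mathcal{V}$ of groupoids, $\mathcal{V}\circ\mathcal{S}$ is the class of all groupoids $A$ having a congruence $\theta$ such that $A/\theta\in\mathcal{S}$ and every $\theta$-class (a subgroupoid) lies in $\mathcal{V}$. *)

(* Defs.v *)
From Stdlib Require Import FunctionalExtensionality PropExtensionality.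

Record Groupoid : Type := {
  carrier :> Type;
  gop : carrier -> carrier -> carrier;
  g_inh : inhabited carrier
}.

Inductive term : Type :=
| Var : nat -> term
| App : term -> term -> term.

Fixpoint eval (A : Groupoid) (v : nat -> A) (t : term) : A :=
  match t with
  | Var n => v n
  | App s u => gop A (eval A v s) (eval A v u)
  end.

Definition satisfies (A : Groupoid) (s t : term) : Prop :=
  forall v : nat -> A, eval A v s = eval A v t.

Fixpoint occurs (n : nat) (t : term) : Prop :=
  match t with
  | Var m => n = m
  | App s u => occurs n s \/ occurs n u
  end.

Definition regular_identity (s t : term) : Prop :=
  forall n, occurs n s <-> occurs n t.

Definition gclass := Groupoid -> Prop.

Definition Mod (Sigma : term -> term -> Prop) : gclass :=
  fun A => forall s t, Sigma s t -> satisfies A s t.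

Definition is_variety (K : gclass) : Prop :=
  exists Sigma : term -> term -> Prop, forall A, K A <-> Mod Sigma A.

Definition regular_variety (K : gclass) : Prop :=
  is_variety K /\
  forall s t, (forall A, K A -> satisfies A s t) -> regular_identity s t.

(* The variety of semilattices: groupoids satisfying all regular identities. *)
Definition SL : gclass := Mod regular_identity.

Definition comm_identity_l : term := App (Var 0) (Var 1).
Definition comm_identity_r : term := App (Var 1) (Var 0).
Definition CG : gclass := Mod (fun s t => s = comm_identity_l /\ t = comm_identity_r).

Definition is_congruence (A : Groupoid) (th : A -> A -> Prop) : Prop :=
  (forall x, th x x) /\
  (forall x y, th x y -> th y x) /\
  (forall x y z, th x y -> th y z -> th x z) /\
  (forall x x' y y', th x x' -> th y y' -> th (gop A x y) (gop A x' y')).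

Definition qcarrier (A : Groupoid) (th : A -> A -> Prop) : Type :=
  { Q : A -> Prop | exists a, Q = th a }.

Lemma qop_class (A : Groupoid) (th : A -> A -> Prop) (Hc : is_congruence A th)
  (Q1 Q2 : qcarrier A th) :
  exists c, (fun z => exists x y, proj1_sig Q1 x /\ proj1_sig Q2 y /\ th (gop A x y) z)
            = th c.
Proof.
  destruct Q1 as [Q1 [a Ha]], Q2 as [Q2 [b Hb]]; simpl; subst.
  destruct Hc as [Hr [Hs [Ht Hm]]].
  exists (gop A a b).
  apply functional_extensionality; intro z; apply propositional_extensionality.
  split.
  - intros [x [y [Hx [Hy Hz]]]]. eapply Ht; [apply Hm; eassumption | exact Hz].
  - intros H. exists a, b. auto.
Qed.

Definition qop (A : Groupoid) (th : A -> A -> Prop) (Hc : is_congruence A th)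
  (Q1 Q2 : qcarrier A th) : qcarrier A th :=
  exist _ (fun z => exists x y, proj1_sig Q1 x /\ proj1_sig Q2 y /\ th (gop A x y) z)
        (qop_class A th Hc Q1 Q2).

Lemma q_inh (A : Groupoid) (th : A -> A -> Prop) : inhabited (qcarrier A th).
Proof.
  destruct (g_inh A) as [a]. constructor. exists (th a). exists a. reflexivity.
Qed.

Definition quotient (A : Groupoid) (th : A -> A -> Prop) (Hc : is_congruence A th)
  : Groupoid :=
  {| carrier := qcarrier A th; gop := qop A th Hc; g_inh := q_inh A th |}.

Definition subgroupoid (A : Groupoid) (P : A -> Prop)
  (Hcl : forall x y, P x -> P y -> P (gop A x y)) (Hne : exists x, P x) : Groupoid :=
  {| carrier := { x : A | P x };
     gop := fun x y => exist P (gop A (proj1_sig x) (proj1_sig y))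
                             (Hcl _ _ (proj2_sig x) (proj2_sig y));
     g_inh := match Hne with ex_intro _ x Hx => inhabits (exist P x Hx) end |}.

Definition maltsev (V W : gclass) : gclass :=
  fun A => exists (th : A -> A -> Prop) (Hc : is_congruence A th),
    W (quotient A th Hc) /\
    forall a : A,
      exists (Hcl : forall x y, th a x -> th a y -> th a (gop A x y)),
        V (subgroupoid A (th a) Hcl (ex_intro _ a (proj1 Hc a))).

(* Main.v *)
Require Import Defs.
From Stdlib Require Import FunctionalExtensionality PropExtensionality ProofIrrelevance ClassicalEpsilon Arith Lia.

Lemma chain_SL (G : Groupoid) (r : G -> nat)
  (Hinj : forall x y, r x = r y -> x = y)
  (Hm : forall x y, r (gop G x y) = Nat.min (r x) (r y)) : SL G.
Proof.
  assert (key : forall v t k, k <= r (eval G v t) <-> forall n, occurs n t -> k <= r (v n)).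
  { intros v t; induction t as [m|t1 IH1 t2 IH2]; intro k; simpl.
    - split; [intros H n Hn; subst; exact H | intros H; apply H; reflexivity].
    - rewrite Hm, Nat.min_glb_iff, IH1, IH2. split.
      + intros [H1 H2] n [Hn|Hn]; auto.
      + intros H; split; intros n Hn; apply H; auto. }
  intros s t Hreg v. apply Hinj. apply Nat.le_antisymm.
  - apply key. intros n Hn. apply (proj1 (key v s _) (le_n _)). apply Hreg; exact Hn.
  - apply key. intros n Hn. apply (proj1 (key v t _) (le_n _)). apply Hreg; exact Hn.
Qed.

Inductive TA := a0 | a1 | a2 | a3 | a4.
Definition opA (x y : TA) : TA :=
  match x, y with
  | a0, a0 => a0 | a0, a1 => a1 | a0, a2 => a1 | a0, a3 => a3 | a0, a4 => a4
  | a1, a0 => a1 | a1, a1 => a1 | a1, a2 => a1 | a1, a3 => a3 | a1, a4 => a4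
  | a2, a0 => a2 | a2, a1 => a1 | a2, a2 => a2 | a2, a3 => a3 | a2, a4 => a4
  | a3, a0 => a3 | a3, a1 => a3 | a3, a2 => a4 | a3, a3 => a3 | a3, a4 => a3
  | a4, a0 => a4 | a4, a1 => a4 | a4, a2 => a4 | a4, a3 => a3 | a4, a4 => a4
  end.
Definition GA : Groupoid := {| carrier := TA; gop := opA; g_inh := inhabits a0 |}.

Inductive TB := b0 | b1 | b2 | b3.
Definition opB (x y : TB) : TB :=
  match x, y with
  | b0, b0 => b0 | b0, b1 => b3 | b0, b2 => b2 | b0, b3 => b3
  | b1, b0 => b1 | b1, b1 => b1 | b1, b2 => b2 | b1, b3 => b3
  | b2, b0 => b2 | b2, b1 => b3 | b2, b2 => b2 | b2, b3 => b2
  | b3, b0 => b3 | b3, b1 => b3 | b3, b2 => b2 | b3, b3 => b3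
  end.
Definition GB : Groupoid := {| carrier := TB; gop := opB; g_inh := inhabits b0 |}.

Definition fAB (x : TA) : TB :=
  match x with a0 => b0 | a1 => b3 | a2 => b1 | a3 => b2 | a4 => b3 end.
Definition sec (y : TB) : TA :=
  match y with b0 => a0 | b1 => a2 | b2 => a3 | b3 => a1 end.

Lemma fAB_hom : forall x y, fAB (opA x y) = opB (fAB x) (fAB y).
Proof. destruct x, y; reflexivity. Qed.
Lemma fAB_sec : forall y, fAB (sec y) = y.
Proof. destruct y; reflexivity. Qed.

Definition gA (x : TA) : nat :=
  match x with a0 => 2 | a1 => 1 | a2 => 1 | a3 => 0 | a4 => 0 end.
Definition cA (x : TA) : nat :=
  match x with a0 => 0 | a1 => 0 | a2 => 1 | a3 => 0 | a4 => 1 end.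

Lemma gA_hom : forall x y, gA (opA x y) = Nat.min (gA x) (gA y).
Proof. destruct x, y; reflexivity. Qed.
Lemma cA_hom : forall x y, gA x = gA y -> cA (opA x y) = Nat.min (cA x) (cA y).
Proof. destruct x, y; simpl; intro H; try discriminate; reflexivity. Qed.
Lemma gc_inj : forall x y, gA x = gA y -> cA x = cA y -> x = y.
Proof. destruct x, y; simpl; intros H1 H2; try discriminate; reflexivity. Qed.

Definition thA (x y : GA) : Prop := gA x = gA y.

Lemma thA_cong : is_congruence GA thA.
Proof.
  unfold thA; repeat split.
  - intros x y H; symmetry; exact H.
  - intros x y z H1 H2; congruence.
  - intros x x' y y' H1 H2. simpl. rewrite !gA_hom, H1, H2. reflexivity.
Qed.

Lemma quot_SL (Hc : is_congruence GA thA) : SL (quotient GA thA Hc).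
Proof.
  set (rep := fun Q : qcarrier GA thA =>
                proj1_sig (constructive_indefinite_description _ (proj2_sig Q))).
  assert (Hrep : forall Q, proj1_sig Q = thA (rep Q)).
  { intro Q. unfold rep. exact (proj2_sig (constructive_indefinite_description _ (proj2_sig Q))). }
  apply (chain_SL (quotient GA thA Hc) (fun Q : qcarrier GA thA => gA (rep Q))).
  - intros Q1 Q2 H. simpl in H.
    assert (E : proj1_sig Q1 = proj1_sig Q2).
    { rewrite !Hrep. unfold thA. rewrite H. reflexivity. }
    destruct Q1 as [P1 H1], Q2 as [P2 H2]; simpl in E; subst.
    f_equal; apply proof_irrelevance.
  - intros Q1 Q2. simpl.
    set (q := qop GA thA Hc Q1 Q2).
    assert (Hq : proj1_sig q (rep q)) by (rewrite Hrep; reflexivity).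
    unfold q at 1 in Hq; simpl in Hq.
    destruct Hq as [x [y [Hx [Hy Hxy]]]].
    rewrite Hrep in Hx, Hy. unfold thA in *. simpl in Hxy.
    rewrite <- Hxy, gA_hom, <- Hx, <- Hy. reflexivity.
Qed.

Lemma class_SL (a : GA) Hcl Hne : SL (subgroupoid GA (thA a) Hcl Hne).
Proof.
  apply (chain_SL (subgroupoid GA (thA a) Hcl Hne) (fun x : {x : TA | thA a x} => cA (proj1_sig x))).
  - intros [x Hx] [y Hy] H; simpl in *. unfold thA in *.
    assert (x = y) by (apply gc_inj; congruence). subst.
    f_equal; apply proof_irrelevance.
  - intros [x Hx] [y Hy]; simpl. unfold thA in *. apply cA_hom. congruence.
Qed.

Lemma SL_sub_V (V : gclass) : regular_variety V -> forall G, SL G -> V G.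
Proof.
  intros [[Sig HSig] Hreg] G HG. apply HSig. intros s t Hst. apply HG.
  apply Hreg. intros A0 HA0. apply HSig in HA0. apply HA0. exact Hst.
Qed.

Lemma comm_reg : regular_identity comm_identity_l comm_identity_r.
Proof. intro n; simpl; tauto. Qed.

Theorem corollary4p16 :
  forall V : gclass,
    regular_variety V ->
    (forall A, V A -> CG A) ->
    ~ is_variety (maltsev V SL).
Proof.
  intros V HV HVCG [Sig HSig].
  assert (HA : maltsev V SL GA).
  { exists thA, thA_cong. split.
    - apply quot_SL.
    - intro a.
      assert (Hcl : forall x y, thA a x -> thA a y -> thA a (gop GA x y)).
      { unfold thA; intros x y Hx Hy; simpl. rewrite gA_hom, <- Hx, <- Hy.
        symmetry; apply Nat.min_id. }
      exists Hcl. apply (SL_sub_V V HV). apply class_SL. }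
  assert (HB : maltsev V SL GB).
  { apply HSig. apply HSig in HA. intros s t Hst v.
    assert (Ev : forall u, eval GB v u = fAB (eval GA (fun n => sec (v n)) u)).
    { induction u as [m|u1 IH1 u2 IH2]; simpl.
      - symmetry; apply fAB_sec.
      - rewrite IH1, IH2, fAB_hom. reflexivity. }
    rewrite !Ev. f_equal. apply HA. exact Hst. }
  destruct HB as [th [Hc [HQ Hcls]]].
  destruct Hc as [Hr [Hs [Ht Hm]]] eqn:EHc.
  assert (commrel : forall x y : GB, th (gop GB x y) (gop GB y x)).
  { intros x y.
    pose (cls := fun z : GB => exist (fun Q : GB -> Prop => exists a, Q = th a)
                                     (th z) (ex_intro _ z eq_refl)).
    pose proof (HQ comm_identity_l comm_identity_r comm_reg
                  (fun n => match n with 0 => cls x | _ => cls y end)) as H.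
    simpl in H. apply (f_equal (@proj1_sig _ _)) in H. simpl in H.
    apply (f_equal (fun P => P (opB x y))) in H.
    assert (L : exists x0 y0, th x x0 /\ th y y0 /\ th (opB x0 y0) (opB x y)).
    { exists x, y. auto. }
    destruct (eq_rect _ (fun P : Prop => P) L _ H) as [x0 [y0 [H1 [H2 H3]]]].
    simpl. apply Hs. eapply Ht; [|exact H3]. apply Hm; auto. }
  assert (H31 : th b3 b1) by exact (commrel b0 b1).
  assert (H23 : th b2 b3) by exact (commrel b1 b2).
  assert (H12 : th b1 b2) by (eapply Ht; [apply Hs; exact H31 | apply Hs; exact H23]).
  destruct (Hcls b1) as [Hcl HV1].
  apply HVCG in HV1.
  pose proof (HV1 comm_identity_l comm_identity_r (conj eq_refl eq_refl)
    (fun n => match n with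
              | 0 => exist (th b1) b1 (Hr b1)
              | _ => exist (th b1) b2 H12 end)) as E.
  simpl in E. apply (f_equal (@proj1_sig _ _)) in E. simpl in E. discriminate E.
Qed.
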